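(* Let $G$ be a graph and let $c_1,\ldots,c_m$ be proper colorings of $G$. For any choice of positive integers $d_1,\ldots,d_m$ with $d_1+\cdots+d_m=\operatorname{ind}(\operatorname{Hom}(K_2,G))$, there exists a complete bipartite subgraph of $G$ that, for each $i\in[m]$, contains a subgraph isomorphic to $K_{\lceil d_i/2\rceil+1,\lfloor d_i/2\rfloor+1}$ which is colorful with respect to $c_i$ (i.e., whose vertices receive pairwise distinct colors under $c_i$).
   Context: For a graph $G=(V,E)$, $\operatorname{Hom}(K_2,G)$ is the poset whose elements are the pairs $(A,B)$ of non-empty disjoint subsets of $V$ such that every vertex of $A$ is adjacent to every vertex of $B$, ordered by $(A,B)\preceq(A',B')$ iff $A\subseteq A'$ and $B\subseteq B'$; it is identified with its order complex (vertices are poset elements, simplices are chains), which carries the free $\mathbb{Z}_2$-action $(A,B)\mapsto(B,A)$. The $\mathbb{Z}_2$-index $\operatorname{ind}(\mathsf{K})$ of a free simplicial $\mathbb{Z}_2$-complex $\mathsf{K}$ is the minimal $d$ such that there is a continuous map from $\mathsf{K}$ to $\mathcal{S}^d$ commuting with the $\mathbb{Z}_2$-actions (antipodal map on $\mathcal{S}^d$). *)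

(* Defs.v *)
From HB Require Import structures.
From mathcomp Require Import all_boot all_order all_algebra.
From mathcomp Require Import all_classical all_reals all_analysis.
From mathcomp Require Import Rstruct Rstruct_topology.
From Stdlib Require Import Rdefinitions.
Set Implicit Arguments. Unset Strict Implicit. Unset Printing Implicit Defensive.
Import Order.TTheory GRing.Theory Num.Theory.
Local Open Scope classical_set_scope.
Local Open Scope ring_scope.

Definition simple_graph (V : finType) (e : rel V) : Prop :=
  symmetric e /\ irreflexive e.

(* Candidate elements of Hom(K_2,G): pairs of vertex subsets. *)
Definition pairT (V : finType) : finType := ({set V} * {set V})%type.

Definition in_Hom (V : finType) (e : rel V) (p : pairT V) : bool :=
  [&& p.1 != finset.set0, p.2 != finset.set0, [disjoint p.1 & p.2] &
      [forall a in p.1, forall b in p.2, e a b]].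

Definition hom_le (V : finType) (p q : pairT V) : bool :=
  (p.1 \subset q.1) && (p.2 \subset q.2).

Definition hom_swap (V : finType) (p : pairT V) : pairT V := (p.2, p.1).

Definition NP (V : finType) : nat := #|pairT V|.

Definition coord (V : finType) (x : 'rV[R]_(NP V)) (p : pairT V) : R :=
  x ord0 (enum_rank p).

(* Geometric realization of the order complex of Hom(K_2,G), inside R^{NP V}:
   points are convex combinations (barycentric coordinates) of poset elements
   whose support is a chain. *)
Definition hom_realization (V : finType) (e : rel V) : set 'rV[R]_(NP V) :=
  [set x | (forall p, 0 <= coord x p)
         /\ (forall p, ~~ in_Hom e p -> coord x p = 0)
         /\ (\sum_(p : pairT V) coord x p = 1)
         /\ (forall p q, coord x p != 0 -> coord x q != 0 ->
               hom_le p q || hom_le q p)].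

Definition swap_pt (V : finType) (x : 'rV[R]_(NP V)) : 'rV[R]_(NP V) :=
  \row_(i < NP V) coord x (hom_swap (enum_val i)).

Definition sphere (d : nat) : set 'rV[R]_(d.+1) :=
  [set v | \sum_(i < d.+1) v ord0 i ^+ 2 = 1].

Definition Z2_map_exists (V : finType) (e : rel V) (d : nat) : Prop :=
  exists f : 'rV[R]_(NP V) -> 'rV[R]_(d.+1),
    {within hom_realization e, continuous f}
    /\ (forall x, hom_realization e x -> @sphere d (f x))
    /\ (forall x, hom_realization e x -> f (swap_pt x) = - f x).

Definition is_Z2_index_Hom (V : finType) (e : rel V) (n : nat) : Prop :=
  Z2_map_exists e n /\ (forall d, Z2_map_exists e d -> leq n d).

Definition proper_coloring (V : finType) (e : rel V) (c : V -> nat) : Prop :=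
  forall x y, e x y -> c x <> c y.

Definition complete_bipartite (V : finType) (e : rel V) (A B : {set V}) : Prop :=
  A :&: B = finset.set0 /\ (forall a b, a \in A -> b \in B -> e a b).

(* The complete bipartite graph on sides (A,B) contains a subgraph isomorphic to
   K_{p,q} colorful w.r.t. c: sides A' of A and B' of B with sizes {p,q}
   (in either orientation) on which c is injective. *)
Definition contains_colorful_Kpq (V : finType) (A B : {set V}) (p q : nat)
    (c : V -> nat) : Prop :=
  exists A' B' : {set V}, A' \subset A /\ B' \subset B /\
    ((#|A'| = p /\ #|B'| = q) \/ (#|A'| = q /\ #|B'| = p)) /\
    {in A' :|: B' &, injective c}.

(* Main.v *)
Require Import Defs.
From mathcomp Require Import all_boot all_order all_algebra.
From HB Require Import structures.
From mathcomp Require Import all_classical all_reals all_analysis.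
From mathcomp Require Import Rstruct Rstruct_topology.
From Stdlib Require Import Rdefinitions Classical.
From mathcomp Require Import zify ring lra.
Import Defs.
Import Order.TTheory GRing.Theory Num.Theory.
Set Implicit Arguments. Unset Strict Implicit. Unset Printing Implicit Defensive.

Section Comb.
Variables (V : finType) (e : rel V).

Definition Mc (col : V -> nat) : nat := (\max_(v : V) col v).+1.
Definition cidx (col : V -> nat) (a : V) : 'I_(Mc col) :=
  @inord (\max_(v : V) col v) (col a).
Definition cimg (col : V -> nat) (A : {set V}) : {set 'I_(Mc col)} :=
  [set cidx col a | a in A].

Lemma colM col v : col v < Mc col.
Proof. by rewrite /Mc ltnS (leq_bigmax v). Qed.

Lemma inord_col_inj col a b :
  cidx col a = cidx col b -> col a = col b.
Proof. by move/(congr1 val); rewrite /cidx /= !inordK // ?colM. Qed.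

Lemma hom_unpack q : in_Hom e q ->
  [/\ q.1 != finset.set0, q.2 != finset.set0, [disjoint q.1 & q.2] &
      forall a b, a \in q.1 -> b \in q.2 -> e a b].
Proof.
case/and4P => h1 h2 h3 /forall_inP h4; split => // a b ha hb.
by have /forall_inP := h4 a ha; apply.
Qed.

Lemma cimg_disj col (hc : proper_coloring e col) q :
  in_Hom e q -> [disjoint cimg col q.1 & cimg col q.2].
Proof.
case/hom_unpack => _ _ _ h4.
rewrite -finset.setI_eq0; apply/eqP/setP => y; rewrite !inE.
apply/negP => /andP[/imsetP[a Ha ->] /imsetP[b Hb /inord_col_inj]].
exact: hc (h4 a b Ha Hb).
Qed.

Lemma cimg_gt0 col (A : {set V}) : A != finset.set0 -> 0 < #|cimg col A|.
Proof. by rewrite card_gt0 /cimg finset.imset_eq0. Qed.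

Lemma cimgS col (A B : {set V}) : A \subset B -> cimg col A \subset cimg col B.
Proof. exact: finset.imsetS. Qed.

Definition Jv (s t : nat) : nat := if s == t then (s.*2).-1 else (minn s t).*2.
Definition Jc col (p : pairT V) : nat := Jv #|cimg col p.1| #|cimg col p.2|.

Lemma cimg_neq col (hc : proper_coloring e col) q :
  in_Hom e q -> cimg col q.1 != cimg col q.2.
Proof.
move=> hq; have := cimg_disj hc hq; have /hom_unpack[h1 _ _ _] := hq.
apply: contraL => /eqP <-; rewrite -finset.setI_eq0 finset.setIid.

by rewrite /cimg finset.imset_eq0.
Qed.

Lemma pick_sub col (A : {set V}) k : k <= #|cimg col A| ->
  exists A' : {set V}, [/\ A' \subset A, #|A'| = k & {in A' &, injective col}].
Proof.
elim: k => [|k IH] hk.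
  by exists finset.set0; split; rewrite ?finset.sub0set ?finset.cards0 // => a b; rewrite inE.
have [A' [sA cA iA]] := IH (ltnW hk).
have icA : #|cimg col A'| = k.
  rewrite /cimg finset.card_in_imset ?cA // => a b ha hb /inord_col_inj; exact: iA.
have : ~~ (cimg col A \subset cimg col A').
  apply/negP => /subset_leq_card; rewrite icA; lia.
case/fintype.subsetPn => y /imsetP[a Ha ->] Hn.
have aA' : a \notin A'.
  by apply: contra Hn => h; apply/imsetP; exists a.
exists (a |: A'); split.
- by rewrite finset.subUset finset.sub1set Ha sA.
- by rewrite finset.cardsU1 aA' cA.
- move=> x z; rewrite !inE => /orP[/eqP->|hx] /orP[/eqP->|hz] //.
  + move=> h; move: Hn => /negP[]; apply/imsetP; exists z => //; by rewrite /cidx h.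
  + move=> h; move: Hn => /negP[]; apply/imsetP; exists x => //; by rewrite /cidx h.
  + exact: iA.
Qed.

Lemma hom_cb q : in_Hom e q -> complete_bipartite e q.1 q.2.
Proof.
case/hom_unpack => _ _ h3 h4; split => //.
by apply/eqP; rewrite finset.setI_eq0.
Qed.

Lemma Jbig col (hc : proper_coloring e col) q d :
  in_Hom e q -> d < Jc col q ->
  contains_colorful_Kpq q.1 q.2 (uphalf d).+1 (d./2).+1 col.
Proof.
move=> hq; rewrite /Jc /Jv.
set s := #|cimg col q.1|; set t := #|cimg col q.2| => hJ.
have hu := uphalf_half d; have ho := odd_double_half d; have hb := leq_b1 (odd d).
have key : ((uphalf d).+1 <= s /\ (d./2).+1 <= t) \/ ((d./2).+1 <= s /\ (uphalf d).+1 <= t).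
  move: hJ; case: eqP => [est|nst] hJ; lia.
have /hom_unpack[_ _ _ h4] := hq.
have mk : forall P Q, P <= s -> Q <= t ->
   exists A' B' : {set V}, [/\ A' \subset q.1, B' \subset q.2, #|A'| = P, #|B'| = Q &
      {in A' :|: B' &, injective col}].
  move=> P Q hP hQ.
  have [A' [sA cA iA]] := pick_sub hP.
  have [B' [sB cB iB]] := pick_sub hQ.
  exists A', B'; split => //.
  move=> x z; rewrite !inE => /orP[hx|hx] /orP[hz|hz].
  + exact: iA.
  + move=> h; exfalso; apply: (hc x z) h; apply: h4; [exact: (fintype.subsetP sA)|exact: (fintype.subsetP sB)].
  + move=> h; exfalso; apply: (hc z x) (esym h); apply: h4; [exact: (fintype.subsetP sA)|exact: (fintype.subsetP sB)].
  + exact: iB.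
case: key => [[h1 h2]|[h1 h2]].
- have [A' [B' [? ? ? ? ?]]] := mk _ _ h1 h2.
  by exists A', B'; do 3!split => //; left.
- have [A' [B' [? ? ? ? ?]]] := mk _ _ h1 h2.
  by exists A', B'; do 3!split => //; right.
Qed.

End Comb.

Section Sign.
Local Open Scope ring_scope.
Variables (V : finType) (e : rel V).

Definition cmpR (a b : nat) : R := if leq a.+1 b then -1 else if leq b.+1 a then 1 else 0.

Lemma cmpR_anti a b : cmpR b a = - cmpR a b.
Proof. by rewrite /cmpR; case: (ssrnat.ltngtP a b) => _; rewrite ?opprK ?oppr0. Qed.

Lemma cmpR_sq a b : a != b -> cmpR a b * cmpR a b = 1.
Proof.
by rewrite /cmpR; case: (ssrnat.ltngtP a b) => // _ _; rewrite ?mulr1 ?mulrNN ?mulr1.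
Qed.

Definition sgc col (p : pairT V) : R :=
  if #|cimg col p.1| == #|cimg col p.2|
  then cmpR (enum_rank (cimg col p.1)) (enum_rank (cimg col p.2))
  else cmpR #|cimg col p.1| #|cimg col p.2|.

Definition vco col (j : nat) (p : pairT V) : R :=
  if Jc col p == j.+1 then sgc col p else 0.

Lemma vco_swap col j p : vco col j (hom_swap p) = - vco col j p.
Proof.
rewrite /vco /Jc /Jv /sgc /=.
rewrite [#|cimg col p.2| == _]eq_sym minnC.
case: (#|cimg col p.1| =P #|cimg col p.2|) => h.
- rewrite h; case: ifP => _; [by rewrite cmpR_anti|by rewrite oppr0].
- case: ifP => _; [by rewrite cmpR_anti|by rewrite oppr0].
Qed.
Lemma sgc_sq col (hc : proper_coloring e col) q :
  in_Hom e q -> sgc col q * sgc col q = 1.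
Proof.
move=> hq; rewrite /sgc; case: eqP => h; apply: cmpR_sq.
  have := cimg_neq hc hq; apply: contra => /eqP H.
  by apply/eqP; apply: enum_rank_inj; apply: val_inj.
by apply/eqP.
Qed.

Lemma Jsgn col (hc : proper_coloring e col) p q :
  in_Hom e p -> in_Hom e q -> hom_le p q -> Jc col p = Jc col q ->
  sgc col p = sgc col q.
Proof.
move=> hp hq /andP[s1 s2].
have /hom_unpack[p1 p2 _ _] := hp.
have /hom_unpack[q1 q2 _ _] := hq.
have gp1 := cimg_gt0 col p1; have gp2 := cimg_gt0 col p2.
have S1 := cimgS col s1; have S2 := cimgS col s2.
have l1 := subset_leq_card S1; have l2 := subset_leq_card S2.
rewrite /Jc /Jv /sgc.
set S := cimg col p.1 in gp1 S1 l1 *; set T := cimg col p.2 in gp2 S2 l2 *.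
set S' := cimg col q.1 in S1 l1 *; set T' := cimg col q.2 in S2 l2 *.
case: eqP => e1; case: eqP => e2 hJ.
- have ess : #|S| = #|S'| by lia.
  have ett : #|T| = #|T'| by lia.
  have -> : S = S' by apply/eqP; rewrite eqEcard S1 ess leqnn.
  have -> : T = T' by apply/eqP; rewrite eqEcard S2 ett leqnn.
  done.
- exfalso; lia.
- exfalso; lia.
- rewrite /cmpR.
  have h : leq #|S|.+1 #|T| = leq #|S'|.+1 #|T'| by apply/idP/idP => ?; lia.
  have h' : leq #|T|.+1 #|S| = leq #|T'|.+1 #|S'| by apply/idP/idP => ?; lia.
  by rewrite h h'.
Qed.
End Sign.

Section Analytic.
Local Open Scope classical_set_scope.
Local Open Scope ring_scope.

Lemma cont_sum (T : topologicalType) (I : Type) (r : seq I) (F : I -> T -> R) x :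
  (forall i, {for x, continuous (F i)}) ->
  {for x, continuous (fun y => \sum_(i <- r) F i y)}.
Proof.
move=> HF; elim: r => [|a r IH].
  have -> : (fun y => \sum_(i <- [::]) F i y) = fun=> 0.
    by apply: funext => y; rewrite big_nil.
  exact: cvg_cst.
have -> : (fun y => \sum_(i <- a :: r) F i y) = fun y => F a y + \sum_(i <- r) F i y.
  by apply: funext => y; rewrite big_cons.

rewrite /prop_for /continuous_at.
by apply: (@cvgD _ R^o); [exact: HF|exact: IH].
Qed.

Lemma cont_row (T : topologicalType) (N : nat) (F : 'I_N -> T -> R) x :
  (forall i, {for x, continuous (F i)}) ->
  {for x, continuous (fun y => \row_(i < N) F i y)}.
Proof.
move=> HF.
apply/cvg_ballP => eps eps0.
have : \forall y \near x, forall i : 'I_N, ball (F i x) eps (F i y).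
  apply: filter_forall => i.
  have := HF i. move/cvg_ballP => /(_ eps eps0). done.
apply: filterS => y Hy.
split => // i j; rewrite !mxE. exact: Hy.
Qed.

Definition gk N K (W : 'M[R]_(N, K)) (y : 'rV[R]_N) (k : 'I_K) : R :=
  \sum_(j < N) y ord0 j * W j k.

Lemma gk_cont N K (W : 'M[R]_(N, K)) k x : {for x, continuous (fun y => gk W y k)}.
Proof.
rewrite /gk; apply: cont_sum => j.
have h1 := @coord_continuous R 1 N ord0 j x.
have h2 : ({for x, continuous (fun _ : 'rV[R]_N => W j k)}).
  rewrite /prop_for /continuous_at.
  exact: (@cvg_cst R^o (W j k) _ (nbhs x) _).
exact: (continuousM h1 h2).
Qed.

Lemma analytic N K (A : set 'rV[R]_N) (swp : 'rV[R]_N -> 'rV[R]_N)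
  (W : 'M[R]_(N, K.+1)) :
  (forall x, A x -> exists k, gk W x k != 0) ->
  (forall x, A x -> forall k, gk W (swp x) k = - gk W x k) ->
  exists f : 'rV[R]_N -> 'rV[R]_(K.+1), {within A, continuous f}
    /\ (forall x, A x -> sphere (f x)) /\ (forall x, A x -> f (swp x) = - f x).
Proof.
move=> Hnz Hodd.
pose S y := \sum_(k < K.+1) (gk W y k) ^+ 2.
have Spos x : A x -> 0 < S x.
  move=> Ax; have [k0 Hk0] := Hnz x Ax.
  rewrite /S (bigD1 k0) //=. 
  apply: (@lt_le_trans _ _ ((gk W x k0) ^+ 2)); first by rewrite lt_def sqr_ge0 andbT sqrf_eq0.
  rewrite lerDl; apply: sumr_ge0 => i _; exact: sqr_ge0.
have Scont x : {for x, continuous S}.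
  rewrite /S; apply: cont_sum => k.
  have -> : (fun y => gk W y k ^+ 2) = (fun y => gk W y k) \* (fun y => gk W y k).
    by apply: funext => y; rewrite /= expr2.
  by apply: continuousM; apply: gk_cont.
pose s y := (Num.sqrt (S y))^-1.
have scont x : A x -> {for x, continuous s}.
  move=> Ax.
  have e1 : {for x, continuous (fun y => Num.sqrt (S y))}.
    exact: (continuous_comp (Scont x) (@sqrt_continuous R (S x))).
  apply: (continuous_comp e1); apply: inv_continuous.
  by rewrite sqrtr_eq0 -ltNge Spos.
exists (fun y => s y *: \row_k gk W y k); split; [|split].
- apply: continuous_in_subspaceT => x /set_mem Ax.
  apply: continuousZ; first exact: scont.
  by apply: cont_row => k; apply: gk_cont.
- move=> x Ax; rewrite /sphere.
  change (\sum_(i < K.+1) (s x *: \row_k gk W x k) ord0 i ^+ 2 = 1).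
  have -> : \sum_(i < K.+1) (s x *: \row_k gk W x k) ord0 i ^+ 2 = s x ^+ 2 * S x.
    rewrite /S mulr_sumr; apply: eq_bigr => i _.
    by rewrite !mxE exprMn.
  rewrite /s exprVn sqr_sqrtr; last exact/ltW/Spos.
  by rewrite mulVf // gt_eqF // Spos.
- move=> x Ax.
  have -> : s (swp x) = s x.
    rewrite /s /S; congr (_^-1); congr Num.sqrt; apply: eq_bigr => i _.
    by rewrite Hodd // sqrrN.
  by apply/rowP => k; rewrite !mxE Hodd // mulrN.
Qed.
End Analytic.

Section Main.
Local Open Scope ring_scope.

Lemma top_elem (V : finType) (e : rel V) (x : 'rV[R]_(NP V)) :
  hom_realization e x ->
  exists q, [/\ coord x q != 0, in_Hom e q &
     forall p, coord x p != 0 -> in_Hom e p /\ hom_le p q].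
Proof.
case=> H0 [H1 [H2 H3]].
have inH p : coord x p != 0 -> in_Hom e p.
  move=> h; case: (boolP (in_Hom e p)) => // /H1 hz.
  by rewrite hz eqxx in h.
case: (pickP (fun p => coord x p != 0)) => [p0 hp0|hn]; last first.
  exfalso; move: H2; rewrite big1 => [/eqP|p _]; first by rewrite eq_sym oner_eq0.
  by apply/eqP; move: (hn p) => /= /negbFE.
case: (@arg_maxnP _ p0 (fun p => coord x p != 0) (fun p => #|p.1| + #|p.2|)%N hp0).
move=> q hq qmax.
exists q; split => //; first exact: inH.
move=> p hp; split; first exact: inH.
have := H3 p q hp hq; case/orP => // /andP[a1 a2].
have l1 := subset_leq_card a1; have l2 := subset_leq_card a2.
have mm : leq (#|p.1| + #|p.2|) (#|q.1| + #|q.2|) by exact: qmax p hp.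
clear H3 qmax hq hp.
move: a1 a2 l1 l2 mm; case: p => [p1 p2]; case: q => [q1 q2] /= a1 a2 l1 l2 mm.
have e1 : q1 == p1 by rewrite eqEcard a1 /=; lia.
have e2 : q2 == p2 by rewrite eqEcard a2 /=; lia.
by rewrite /hom_le /= -(eqP e1) -(eqP e2) !subxx.
Qed.

Definition Wmat (V : finType) (K : nat) (F : 'I_K.+1 -> pairT V -> R) : 'M[R]_(NP V, K.+1) :=
  \matrix_(jj, k) F k (enum_val jj).

Lemma main_core (V : finType) (e : rel V) (m' : nat) (c : 'I_m'.+1 -> V -> nat)
  (ds : 'I_m'.+1 -> nat) (K : nat) :
  (forall i, proper_coloring e (c i)) ->
  (forall q, in_Hom e q -> exists i, leq (Jc (c i) q) (ds i)) ->
  (forall d, Z2_map_exists e d -> leq K.+1 d) ->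
  (\sum_(i < m'.+1) ds i)%N = K.+1 -> False.
Proof.
move=> Hcol Hsmall Hmin Hsum.
pose TT := {i : 'I_m'.+1 & 'I_(ds i)}.
have Hc : #|{: TT}| = K.+1.
  rewrite card_tagged -Hsum sumnE big_map big_enum /=.
  by apply: eq_bigr => i _; rewrite card_ord.
pose phi (k : 'I_K.+1) : TT := enum_val (cast_ord (esym Hc) k).
pose W := Wmat (fun k p => vco (c (tag (phi k))) (tagged (phi k)) p).
have gk_eq : forall x k, gk W x k =
    \sum_(p : pairT V) coord x p * vco (c (tag (phi k))) (tagged (phi k)) p.
  move=> x k; rewrite /gk (reindex (@enum_rank (pairT V))) /=; last first.
    by apply: onW_bij; exact: enum_rank_bij.
  by apply: eq_bigr => p _; rewrite /W /Wmat mxE enum_rankK.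
have swapK : involutive (@hom_swap V) by case.
have Hodd : forall x, hom_realization e x -> forall k,
    gk W (swap_pt x) k = - gk W x k.
  move=> x _ k; rewrite !gk_eq (reindex (@hom_swap V)) /=; last first.
    by apply: onW_bij; exact: inv_bij.
  rewrite -sumrN; apply: eq_bigr => p _.
  rewrite vco_swap mulrN; congr (- (_ * _)).
  by rewrite /coord /swap_pt mxE enum_rankK swapK.
have Hnz : forall x, hom_realization e x -> exists k, gk W x k != 0.
  move=> x hx.
  have [q [hq0 hqH hqtop]] := top_elem hx.
  case: hx => H0 _.
  have [i hi] := Hsmall q hqH.
  have /hom_unpack[q1 q2 _ _] := hqH.
  have g1 := cimg_gt0 (c i) q1; have g2 := cimg_gt0 (c i) q2.
  have J1 : leq 1 (Jc (c i) q).
    rewrite /Jc /Jv; case: eqP => _; lia.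
  have hlt : leq (Jc (c i) q).-1.+1 (ds i) by lia.
  pose j : 'I_(ds i) := Ordinal hlt.
  exists (cast_ord Hc (enum_rank (Tagged (fun i => 'I_(ds i)) j))).
  rewrite gk_eq /phi cast_ordK enum_rankK /=.
  set sg := sgc (c i) q.
  have hJ : Jc (c i) q = (Jc (c i) q).-1.+1 by lia.
  suff : 0 < sg * \sum_p coord x p * vco (c i) (Jc (c i) q).-1 p.
    by apply: contraTneq => ->; rewrite mulr0 ltxx.
  rewrite mulr_sumr (bigD1 q) //=.
  have t1 : sg * (coord x q * vco (c i) (Jc (c i) q).-1 q) = coord x q.
    by rewrite /vco -hJ eqxx mulrCA (sgc_sq (Hcol i) hqH) mulr1.
  have t2 : 0 <= \sum_(p | p != q) sg * (coord x p * vco (c i) (Jc (c i) q).-1 p).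
    apply: sumr_ge0 => p _.
    case: (eqVneq (coord x p) 0) => [->|hp]; first by rewrite mul0r mulr0.
    have [hpH hle] := hqtop p hp.
    rewrite mulrCA; apply: mulr_ge0 => //.
    rewrite /vco; case: eqP => h; last by rewrite mulr0.
    rewrite (Jsgn (Hcol i) hpH hqH hle) ?(sgc_sq (Hcol i) hqH) //.
    by rewrite h -hJ.
  have cpos : 0 < coord x q by rewrite lt_def hq0 H0.
  rewrite t1; lra.
have [f [fc [fs fo]]] := analytic Hnz Hodd.
have := Hmin K (ex_intro _ f (conj fc (conj fs fo))).
by rewrite ltnn.
Qed.
End Main.

Theorem theorem3p3 (V : finType) (e : rel V) (m : nat)
    (c : 'I_m -> V -> nat) (ds : 'I_m -> nat) (n : nat) :
  simple_graph e ->
  (forall i, proper_coloring e (c i)) ->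
  is_Z2_index_Hom e n ->
  (forall i, (0 < ds i)%N) ->
  (\sum_(i < m) ds i)%N = n ->
  exists A B : {set V}, complete_bipartite e A B /\
    forall i : 'I_m,
      contains_colorful_Kpq A B (uphalf (ds i)).+1 (ds i)./2.+1 (c i).
Proof.
move=> Hsg Hcol [Hex Hmin] Hpos Hsum.
move: c ds Hcol Hpos Hsum; case: m => [|m'] c ds Hcol Hpos Hsum.
  exists finset.set0, finset.set0; split; last by case.
  by split; [rewrite finset.setI0 | move=> a b; rewrite finset.in_set0].
case: (classic (exists A B : {set V}, complete_bipartite e A B /\
    forall i : 'I_m'.+1,
      contains_colorful_Kpq A B (uphalf (ds i)).+1 (ds i)./2.+1 (c i))) => // Hno.
exfalso.
have Hsmall : forall q, in_Hom e q -> exists i, (Jc (c i) q <= ds i)%N.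
  move=> q hq; apply: NNPP => H; apply: Hno; exists q.1, q.2.
  split; first exact: hom_cb.
  move=> i; apply: (Jbig (Hcol i) hq).
  rewrite ltnNge; apply/negP => hle; apply: H; by exists i.
have npos : (0 < n)%N.
  rewrite -Hsum big_ord_recl; have := Hpos ord0; lia.
move: Hex Hmin Hsum; case: n npos => [//|K] _ Hex Hmin Hsum.
exact: (main_core Hcol Hsmall Hmin Hsum).
Qed.
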